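(* Let $R$ be a ranking profile over $m$ candidates and $\rhd$ a ranking that is pair-priceable for $R$. Then $\rhd$ satisfies strong proportional justified representation (sPJR) for $R$, i.e., for every subprofile $S$ of $R$, $$\Big|A(\rhd)\cap\bigcup_{\succ\in\mathcal{R}:S(\succ)>0}A(\succ)\Big|\geq\Big\lfloor|S|\binom{m}{2}\Big\rfloor.$$
   Context: Let $C$ be a set of $m$ candidates. A ranking is a strict linear order over $C$; $\mathcal{R}$ denotes the set of all rankings over $C$. A ranking profile is a function $R:\mathcal{R}\to[0,1]$ with $\sum_\succ R(\succ)=1$; a subprofile of $R$ is $S:\mathcal{R}\to[0,1]$ with $S(\succ)\leq R(\succ)$ for all $\succ$, and $|S|=\sum_\succ S(\succ)$. For a ranking $\succ$, $A(\succ)=\{(x,y)\in C\times C: x\succ y\}$. For $x\in X\subseteq C$, $u(\succ,x,X)=|\{y\in X\setminus\{x\}:x\succ y\}|$. A ranking $\rhd=x_1,\dots,x_m$ is pair-priceable for $R$ if there is $\pi:\mathcal{R}\times A(\rhd)\to[0,1]$ such that (1) $\pi(\succ,(x_i,x_j))\leq u(\succ,x_i,\{x_i,x_j\})$ for all $\succ$ and $(x_i,x_j)\in A(\rhd)$; (2) $\sum_{(x_i,x_j)\in A(\rhd)}\pi(\succ,(x_i,x_j))\leq\binom{m}{2}R(\succ)$ for all $\succ$; (3) $\sum_\succ\pi(\succ,(x_i,x_j))\leq1$ for all $(x_i,x_j)\in A(\rhd)$; (4) $\sum_\succ\sum_{(x_i,x_j)\in A(\rhd)}\pi(\succ,(x_i,x_j))>\binom{m}{2}-1$.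 *)

(* Defs.v *)
From HB Require Import structures.
From mathcomp Require Import all_boot all_order all_algebra all_fingroup.
From mathcomp Require Import reals.
Set Implicit Arguments. Unset Strict Implicit. Unset Printing Implicit Defensive.
Import Order.TTheory GRing.Theory Num.Theory.
Local Open Scope ring_scope.

(* A ranking (strict linear order over C) is encoded
   as a permutation s : {perm 'I_m} giving the position of each candidate:
   x is ranked above y  iff  s x < s y.  This is a bijection between
   {perm 'I_m} and the strict linear orders on 'I_m. *)
Definition ranking (m : nat) := {perm 'I_m}.

Definition prefers (m : nat) (r : ranking m) (x y : 'I_m) : bool := (r x < r y)%N.

Definition Apairs (m : nat) (r : ranking m) : {set 'I_m * 'I_m} :=
  [set p | prefers r p.1 p.2].

Definition u (m : nat) (r : ranking m) (x : 'I_m) (X : {set 'I_m}) : nat :=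
  #|[set y in X | (y != x) && prefers r x y]|.

Definition is_profile (F : realType) (m : nat) (R : ranking m -> F) : Prop :=
  (forall r, 0 <= R r <= 1) /\ \sum_(r : ranking m) R r = 1.

Definition is_subprofile (F : realType) (m : nat) (R S : ranking m -> F) : Prop :=
  forall r, 0 <= S r <= 1 /\ S r <= R r.

Definition size_prof (F : realType) (m : nat) (S : ranking m -> F) : F :=
  \sum_(r : ranking m) S r.

Definition pair_priceable (F : realType) (m : nat) (R : ranking m -> F)
    (rho : ranking m) : Prop :=
  exists pi : ranking m -> 'I_m * 'I_m -> F,
    (forall r p, p \in Apairs rho -> 0 <= pi r p <= 1) /\
    (forall r p, p \in Apairs rho -> pi r p <= (u r p.1 [set p.1; p.2])%:R) /\
    (forall r, \sum_(p in Apairs rho) pi r p <= ('C(m, 2))%:R * R r) /\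
    (forall p, p \in Apairs rho -> \sum_(r : ranking m) pi r p <= 1) /\
    (('C(m, 2))%:R - 1 < \sum_(r : ranking m) \sum_(p in Apairs rho) pi r p).

Definition sPJR (F : realType) (m : nat) (R : ranking m -> F) (rho : ranking m) : Prop :=
  forall S : ranking m -> F, is_subprofile R S ->
    Num.floor (size_prof S * ('C(m, 2))%:R) <=
    (#|Apairs rho :&: \bigcup_(r : ranking m | 0 < S r) Apairs r|)%:Z.

(* Main.v *)
Require Import Defs.
From HB Require Import structures.
From mathcomp Require Import all_boot all_order all_algebra all_fingroup.
From mathcomp Require Import reals lra.
Import Order.TTheory GRing.Theory Num.Theory.
Local Open Scope ring_scope.

Theorem mainTheorem9 (F : realType) (m : nat) (R : ranking m -> F) (rho : ranking m) :
  is_profile R -> pair_priceable R rho -> sPJR R rho.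
Proof.
move=> [_ Rsum] [pi [H01 [Hu [Hvoter [Hpair Htot]]]]] S HS.
set N : F := ('C(m, 2))%:R.
set Ar := Apairs rho.
set U := \bigcup_(r : ranking m | 0 < S r) Apairs r.
set k := #|Ar :&: U|.
have zero_out : forall r p, p \in Ar -> p \notin U -> 0 < S r -> pi r p = 0.
  move=> r p pA pU Sr; apply/eqP; rewrite eq_le (proj1 (andP (H01 r p pA))) andbT.
  suff h0 : u r p.1 [set p.1; p.2] = 0%N by have := Hu r p pA; rewrite h0.
    apply/eqP; rewrite cards_eq0; apply/eqP/setP => y; rewrite !inE.
    case: (eqVneq y p.1) => [->|ne]; rewrite ?eqxx ?andbF //=.
    case: (eqVneq y p.2) => [->|ne2] //=.
    have : p \notin Apairs r.
      apply: contra pU => pr; apply/bigcupP; by exists r.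
    by rewrite inE; apply: negbTE.
set Q := fun r p => if 0 < S r then 0 else pi r p.
have Qge0 : forall r p, p \in Ar -> 0 <= Q r p.
  by move=> r p pA; rewrite /Q; case: ifP => // _; case/andP: (H01 r p pA).
have step1 : \sum_(r : ranking m) \sum_(p in Ar) pi r p <=
   k%:R + \sum_(r : ranking m) \sum_(p in Ar) Q r p.
  rewrite exchange_big /= (bigID (fun p => p \in U)) /=.
  apply: lerD.
    apply: (@le_trans _ _ (\sum_(p in Ar | p \in U) (1:F))).
      apply: ler_sum => p /andP[pA _]; exact: Hpair.
    have -> : \sum_(p in Ar | p \in U) (1:F) = \sum_(p in Ar :&: U) 1.
      by apply: eq_bigl => p; rewrite in_setI.
    by rewrite sumr_const.
  apply: (@le_trans _ _ (\sum_(i in Ar | i \notin U) \sum_r Q r i)).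
    apply: ler_sum => p /andP[pA pU]; apply: ler_sum => r _; rewrite /Q.
    by case: ifP => Sr //; rewrite zero_out.
  rewrite [X in _ <= X]exchange_big /= [X in _ <= X](bigID (fun p => p \in U)) /=.
  rewrite lerDr; apply: sumr_ge0 => p /andP[pA _]; apply: sumr_ge0 => r _; exact: Qge0.
have Qdef : forall r, \sum_(p in Ar) Q r p = if 0 < S r then 0 else \sum_(p in Ar) pi r p.
  by move=> r; rewrite /Q; case: ifP => _ //; rewrite big1.
have step2 : \sum_(r : ranking m) \sum_(p in Ar) Q r p <= N - N * size_prof S.
  rewrite -[N in N - _]mulr1 -Rsum /size_prof !mulr_sumr -sumrB; apply: ler_sum => r _; rewrite Qdef.
  have [S0 SR] := HS r; have N0 : 0 <= N by rewrite /N ler0n.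
  case: ifP => Sr.
    by rewrite -mulrBr mulr_ge0 // subr_ge0.
  have -> : S r = 0 by apply/eqP; rewrite eq_le -[_ <= 0]negbK -ltNge Sr /=; case/andP: S0.
  by rewrite mulr0 subr0; apply: Hvoter.
have key : size_prof S * N < k%:R + 1.
  move: Htot step1 step2; rewrite -/N (mulrC _ N); lra.
rewrite -ltzD1 floor_lt_int intrD.
by rewrite (_ : ((k%:Z)%:~R : F) = k%:R) //.
Qed.
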